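(* Let $3\leq m\leq n$, $\ell=m-1$. Then $\mathfrak{A}\cap\mathfrak{S}=\varnothing$.
   Context: For $Y=(Y_1;\ldots;Y_\ell)\in\mathbb{R}^{n\times n\times\ell}$ and $\mathbf{a}=(a_1,\ldots,a_\ell,a_m)^\top\in\mathbb{R}^m$, $M(\mathbf{a},Y)=\sum_{k=1}^\ell a_kY_k-a_mE_n$. $\mathfrak{A}=\{Y\mid \det M(\mathbf{a},Y)>0\text{ for all }\mathbf{a}\neq\mathbf{0}\}$, equivalently the set of $Y$ such that $(Y_1;\ldots;Y_\ell;E_n)$ is absolutely nonsingular (i.e. $\det(\sum_k x_kT_k)=0$ only for $x=\mathbf 0$). $V(Y)=\{\mathbf{a}\in\mathbb{R}^n\mid \sum_{k=1}^\ell x_kY_k\mathbf{a}=x_m\mathbf{a}\text{ for some }(x_1,\ldots,x_m)^\top\neq\mathbf{0}\}$, $\hat V(Y)$ its linear span, and $\mathfrak{S}=\{Y\mid\dim\hat V(Y)=n\}$. *)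

(* Defs.v *)
From HB Require Import structures.
From mathcomp Require Import all_boot all_order all_algebra.
Set Implicit Arguments. Unset Strict Implicit. Unset Printing Implicit Defensive.
Import Order.TTheory GRing.Theory Num.Theory.
Local Open Scope ring_scope.

(* A tensor Y = (Y_1; ...; Y_l) in R^{n x n x l} is a family of l square
   matrices.  Vectors a in R^m, m = l+1, are column vectors 'cV_(l.+1);
   a_k (k < l) is the entry widen_ord k, a_m is the last entry ord_max. *)

Definition lastc (R : pzRingType) (l : nat) (a : 'cV[R]_(l.+1)) : R := a ord_max 0.
Definition coefc (R : pzRingType) (l : nat) (a : 'cV[R]_(l.+1)) (k : 'I_l) : R :=
  a (widen_ord (leqnSn l) k) 0.

Definition Mmat (R : pzRingType) (n l : nat) (a : 'cV[R]_(l.+1))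
  (Y : 'I_l -> 'M[R]_n) : 'M[R]_n :=
  \sum_(k < l) coefc a k *: Y k - lastc a *: 1%:M.

Definition in_frakA (R : numDomainType) (n l : nat) (Y : 'I_l -> 'M[R]_n) : Prop :=
  forall a : 'cV[R]_(l.+1), a != 0 -> 0 < \det (Mmat a Y).

Definition in_V (R : pzRingType) (n l : nat) (Y : 'I_l -> 'M[R]_n)
  (v : 'cV[R]_n) : Prop :=
  exists x : 'cV[R]_(l.+1), x != 0 /\
    (\sum_(k < l) coefc x k *: Y k) *m v = lastc x *: v.

(* The set frak S: dim span V(Y) = n, i.e. V(Y) contains n vectors whose
   span (the column space of the matrix they form) has dimension n. *)
Definition in_frakS (R : fieldType) (n l : nat) (Y : 'I_l -> 'M[R]_n) : Prop :=
  exists B : 'M[R]_n, (forall j : 'I_n, in_V Y (col j B)) /\ \rank B = n.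

(* Main.v *)
Require Import Defs.
From HB Require Import structures.
From mathcomp Require Import all_boot all_order all_algebra.
Import Order.TTheory GRing.Theory Num.Theory.
Local Open Scope ring_scope.

Theorem mainTheorem9 (R : rcfType) (n l : nat) (hm : (3 <= l.+1)%N)
  (hmn : (l.+1 <= n)%N) (Y : 'I_l -> 'M[R]_n) :
  ~ (in_frakA Y /\ in_frakS Y).
Proof.
move=> [hA [B [hV hr]]].
have B0 : B = 0.
  apply/matrixP => i j.
  have [x [xn0 hx]] := hV j.
  have hd := hA x xn0.
  have hu : Mmat x Y \in unitmx.
    by rewrite unitmxE unitfE; apply/negP => /eqP h; rewrite h ltxx in hd.
  have h0 : Mmat x Y *m col j B = 0.
    by rewrite /Mmat mulmxBl hx -scalemxAl; by rewrite mul1mx subrr.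
  have := mulKmx hu (col j B).
  rewrite h0 mulmx0 => /matrixP /(_ i 0).
  by rewrite !mxE.
move: hr; rewrite B0 mxrank0 => hn.
have h3 : (3 <= n)%N by apply: leq_trans hm hmn.
by move: h3; clear -hn; case: n / hn.
Qed.
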